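(* Let $A$ be a finite-dimensional self-injective algebra over an algebraically closed field $k$, with $\dim_k A = d$, and let $A^e = A^{\mathrm{op}} \otimes_k A$. If $M$ is an $(A,A)$-bimodule (i.e. an $A^e$-module) with $A \in \overline{\mathcal{O}(M)}$ in $\mathrm{Mod}^{A^e}_d$ (i.e. $M$ degenerates to the regular bimodule $A$), then $M \cong A$ as bimodules. That is, the $A^e$-module $A$ is not a proper degeneration of any other $A^e$-module.
   Context: For a finite-dimensional $k$-algebra $\Lambda$ with a fixed presentation, $\mathrm{Mod}^\Lambda_n$ denotes the affine variety of $\Lambda$-module structures on $k^n$, on which $\mathrm{GL}_n(k)$ acts by conjugation with orbits corresponding to isomorphism classes; $\mathcal{O}(N)$ denotes the orbit of $N$ and $\overline{\mathcal{O}(N)}$ its Zariski closure. For $d$-dimensional modules $M,N$, $M$ degenerates to $N$ if $N \in \overline{\mathcal{O}(M)}$; the degeneration is proper if $M \not\cong N$. *)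

(* Defs.v *)
From HB Require Import structures.
From mathcomp Require Import all_boot all_order all_algebra all_field.

Set Implicit Arguments.
Unset Strict Implicit.
Unset Printing Implicit Defensive.

Import GRing.Theory.
Local Open Scope ring_scope.

Inductive pexpr (R V : Type) : Type :=
  | PConst of R
  | PVar of V
  | PAdd of pexpr R V & pexpr R V
  | PMul of pexpr R V & pexpr R V.

Fixpoint peval (R : nzRingType) (V : Type) (x : V -> R) (p : pexpr R V) : R :=
  match p with
  | PConst c => c
  | PVar v => x v
  | PAdd p q => peval x p + peval x q
  | PMul p q => peval x p * peval x q
  end.

Definition zariski_closure (R : nzRingType) (V : Type) (S : (V -> R) -> Prop)
    (x : V -> R) : Prop :=
  forall p : pexpr R V, (forall y, S y -> peval y p = 0) -> peval x p = 0.

Section ModVariety.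
Variables (k : fieldType) (A : falgType k).

Definition dimA : nat := \dim (fullv : {vspace A}).
Definition bas : dimA.-tuple A := vbasis fullv.

Definition actx n (X : 'I_dimA -> 'M[k]_n) (a : A) : 'M[k]_n :=
  \sum_(i < dimA) coord bas i a *: X i.

(* Presentation of A^e = A^op (x) A by the generators b_i (x) 1 and 1 (x) b_i:
   a point of Mod^{A^e}_n is a pair (L, R) of d-tuples of n x n matrices
   (the left, resp. right, action of the basis elements, acting on row
   vectors of k^n: a.v = v *m actx L a, v.a = v *m actx R a) satisfying
   the bimodule relations. *)
Definition is_bimod n (L R : 'I_dimA -> 'M[k]_n) : Prop :=
  [/\ actx L 1 = 1%:M, actx R 1 = 1%:M,
      (forall a b : A, actx L (a * b) = actx L b *m actx L a),
      (forall a b : A, actx R (a * b) = actx R a *m actx R b)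
    & (forall a b : A, actx L a *m actx R b = actx R b *m actx L a)].

Definition bimod_coords n (L R : 'I_dimA -> 'M[k]_n)
    : (bool * 'I_dimA * 'I_n * 'I_n) -> k :=
  fun v => let: (s, i, p, q) := v in (if s then L i else R i) p q.

Definition bimod_orbit n (L R : 'I_dimA -> 'M[k]_n)
    (y : (bool * 'I_dimA * 'I_n * 'I_n) -> k) : Prop :=
  exists2 g : 'M[k]_n, g \in unitmx &
    y = bimod_coords (fun i => invmx g *m L i *m g) (fun i => invmx g *m R i *m g).

Definition bimod_iso n (L1 R1 L2 R2 : 'I_dimA -> 'M[k]_n) : Prop :=
  exists2 g : 'M[k]_n, g \in unitmx &
    forall i, L1 i *m g = g *m L2 i /\ R1 i *m g = g *m R2 i.

Definition lreg (x : A) : 'M[k]_dimA :=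
  \matrix_(i < dimA, j < dimA) coord bas j (x * bas`_i).
Definition rreg (x : A) : 'M[k]_dimA :=
  \matrix_(i < dimA, j < dimA) coord bas j (bas`_i * x).

Definition Lreg : 'I_dimA -> 'M[k]_dimA := fun i => lreg bas`_i.
Definition Rreg : 'I_dimA -> 'M[k]_dimA := fun i => rreg bas`_i.

Definition is_rmod n (X : 'I_dimA -> 'M[k]_n) : Prop :=
  actx X 1 = 1%:M /\ (forall a b : A, actx X (a * b) = actx X a *m actx X b).

Definition rmod_hom n m (X : 'I_dimA -> 'M[k]_n) (Y : 'I_dimA -> 'M[k]_m)
    (f : 'M[k]_(n, m)) : Prop :=
  forall a : A, actx X a *m f = f *m actx Y a.

(* A is (right) self-injective: the regular right module A_A is an
   injective object of mod A (finite-dimensional right A-modules). *)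
Definition self_injective : Prop :=
  forall n m (X : 'I_dimA -> 'M[k]_n) (Y : 'I_dimA -> 'M[k]_m)
         (f : 'M[k]_(n, m)) (g : 'M[k]_(n, dimA)),
    is_rmod X -> is_rmod Y -> rmod_hom X Y f -> row_free f ->
    rmod_hom X Rreg g ->
    exists2 h : 'M[k]_(m, dimA), rmod_hom Y Rreg h & f *m h = g.

End ModVariety.

(* Main.v *)
Require Import Defs.
From HB Require Import structures.
From mathcomp Require Import all_boot all_order all_fingroup all_algebra all_field.
From mathcomp Require Import zify.
From Stdlib Require Import Classical FunctionalExtensionality Lia.

Set Implicit Arguments.
Unset Strict Implicit.
Unset Printing Implicit Defensive.
Import GRing.Theory.
Local Open Scope ring_scope.


Section Poly.
Variables (R : comNzRingType) (V : Type).

Definition polyf (F : (V -> R) -> R) := exists p : pexpr R V, forall x, peval x p = F x.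

Lemma polyf_const c : polyf (fun _ => c).
Proof. by exists (PConst _ c). Qed.
Lemma polyf_var v : polyf (fun x => x v).
Proof. by exists (PVar _ v). Qed.
Lemma polyf_add F G : polyf F -> polyf G -> polyf (fun x => F x + G x).
Proof. by move=> [p Hp] [q Hq]; exists (PAdd p q) => x /=; rewrite Hp Hq. Qed.
Lemma polyf_mul F G : polyf F -> polyf G -> polyf (fun x => F x * G x).
Proof. by move=> [p Hp] [q Hq]; exists (PMul p q) => x /=; rewrite Hp Hq. Qed.
Lemma polyf_ext F G : polyf F -> (forall x, F x = G x) -> polyf G.
Proof. by move=> [p Hp] E; exists p => x; rewrite Hp E. Qed.
Lemma polyf_opp F : polyf F -> polyf (fun x => - F x).
Proof.
move=> H; apply: (polyf_ext (polyf_mul (polyf_const (-1)) H)) => x.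
by rewrite mulN1r.
Qed.
Lemma polyf_sub F G : polyf F -> polyf G -> polyf (fun x => F x - G x).
Proof. by move=> HF HG; apply: polyf_add => //; apply: polyf_opp. Qed.

Lemma polyf_sum (I : Type) (r : seq I) (P : pred I) (F : I -> (V -> R) -> R) :
  (forall i, polyf (F i)) -> polyf (fun x => \sum_(i <- r | P i) F i x).
Proof.
move=> HF; elim: r => [|a r IH].
  by apply: (polyf_ext (polyf_const 0)) => x; rewrite big_nil.
case Pa: (P a).
  by apply: (polyf_ext (polyf_add (HF a) IH)) => x; rewrite big_cons Pa.
by apply: (polyf_ext IH) => x; rewrite big_cons Pa.
Qed.

Lemma polyf_prod (I : Type) (r : seq I) (P : pred I) (F : I -> (V -> R) -> R) :
  (forall i, polyf (F i)) -> polyf (fun x => \prod_(i <- r | P i) F i x).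
Proof.
move=> HF; elim: r => [|a r IH].
  by apply: (polyf_ext (polyf_const 1)) => x; rewrite big_nil.
case Pa: (P a).
  by apply: (polyf_ext (polyf_mul (HF a) IH)) => x; rewrite big_cons Pa.
by apply: (polyf_ext IH) => x; rewrite big_cons Pa.
Qed.

Definition pmx m n (M : (V -> R) -> 'M[R]_(m, n)) := forall i j, polyf (fun x => M x i j).

Lemma pmx_const m n (C : 'M[R]_(m, n)) : pmx (fun _ => C).
Proof. by move=> i j; apply: polyf_const. Qed.
Lemma pmx_ext m n (M N : (V -> R) -> 'M[R]_(m, n)) : pmx M -> (forall x, M x = N x) -> pmx N.
Proof. by move=> H E i j; apply: (polyf_ext (H i j)) => x; rewrite E. Qed.
Lemma pmx_add m n (M N : (V -> R) -> 'M[R]_(m, n)) : pmx M -> pmx N -> pmx (fun x => M x + N x).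
Proof. by move=> HM HN i j; apply: (polyf_ext (polyf_add (HM i j) (HN i j))) => x; rewrite mxE. Qed.
Lemma pmx_opp m n (M : (V -> R) -> 'M[R]_(m, n)) : pmx M -> pmx (fun x => - M x).
Proof. by move=> HM i j; apply: (polyf_ext (polyf_opp (HM i j))) => x; rewrite mxE. Qed.
Lemma pmx_sub m n (M N : (V -> R) -> 'M[R]_(m, n)) : pmx M -> pmx N -> pmx (fun x => M x - N x).
Proof. by move=> HM HN; apply: pmx_add => //; apply: pmx_opp. Qed.
Lemma pmx_scale m n (F : (V -> R) -> R) (M : (V -> R) -> 'M[R]_(m, n)) :
  polyf F -> pmx M -> pmx (fun x => F x *: M x).
Proof. by move=> HF HM i j; apply: (polyf_ext (polyf_mul HF (HM i j))) => x; rewrite mxE. Qed.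
Lemma pmx_mul m n p (M : (V -> R) -> 'M[R]_(m, n)) (N : (V -> R) -> 'M[R]_(n, p)) :
  pmx M -> pmx N -> pmx (fun x => M x *m N x).
Proof.
move=> HM HN i j.
apply: (@polyf_ext (fun x => \sum_(l < n) M x i l * N x l j)).
  by apply: polyf_sum => l; apply: polyf_mul.
by move=> x; rewrite mxE.
Qed.
Lemma pmx_sum m n (I : Type) (r : seq I) (P : pred I) (M : I -> (V -> R) -> 'M[R]_(m, n)) :
  (forall i, pmx (M i)) -> pmx (fun x => \sum_(i <- r | P i) M i x).
Proof.
move=> HM a b; apply: (@polyf_ext (fun x => \sum_(i <- r | P i) M i x a b)).
  by apply: polyf_sum => i; apply: HM.
by move=> x; rewrite summxE.
Qed.

Lemma polyf_det n (M : (V -> R) -> 'M[R]_n) : pmx M -> polyf (fun x => \det (M x)).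
Proof.
move=> HM; apply: (@polyf_ext (fun x => \sum_(s : 'S_n) (-1) ^+ s * \prod_i M x i (s i))); last first.
  by move=> x; rewrite /determinant unlock.
apply: polyf_sum => s; apply: polyf_mul; first exact: polyf_const.
exact: polyf_prod.
Qed.

Lemma pmx_adj n (M : (V -> R) -> 'M[R]_n) : pmx M -> pmx (fun x => \adj (M x)).
Proof.
move=> HM i j.
apply: (polyf_ext (polyf_mul (polyf_const ((-1) ^+ (j + i)))
   (polyf_det (M := fun x => row' j (col' i (M x))) _))).
  by move=> a b; apply: (polyf_ext (HM _ _)) => x; rewrite !mxE.
by move=> x; rewrite mxE.
Qed.

End Poly.


Section LinAlg.
Variable F : fieldType.

Lemma rank_minor m n (A : 'M[F]_(m, n)) :
  exists (P : 'M[F]_(\rank A, m)) (Q : 'M[F]_(n, \rank A)), \det (P *m A *m Q) != 0.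
Proof.
exists (pid_mx (\rank A) *m invmx (col_ebase A)).
exists (invmx (row_ebase A) *m pid_mx (\rank A)).
rewrite -[A in _ *m invmx _ *m A](mulmx_ebase A) !mulmxA mulmxKV ?col_ebase_unit //.
rewrite -!mulmxA mulKVmx ?row_ebase_unit // mulmxA.
rewrite pid_mx_id ?rank_leq_row // pid_mx_id ?rank_leq_col // pid_mx_1 det1.
exact: oner_neq0.
Qed.

Definition linP m n (f : 'rV[F]_m -> 'rV[F]_n) :=
  forall a u v, f (a *: u + v) = a *: f u + f v.

Lemma mul_lin1 m n (f : 'rV[F]_m -> 'rV[F]_n) : linP f ->
  forall u, u *m lin1_mx f = f u.
Proof.
move=> lin u.
have fD : {morph f : x y / x + y}.
  by move=> x y; have := lin 1 x y; rewrite !scale1r.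
have f0 : f 0 = 0.
  by apply/eqP; rewrite -(addrI (f 0) (_ : f 0 + f 0 = f 0 + 0)) // -fD !addr0.
have fZ : forall a x, f (a *: x) = a *: f x.
  by move=> a x; rewrite -[a *: x]addr0 lin f0 addr0.
rewrite [u in RHS]row_sum_delta (big_morph f fD f0).
apply/rowP => i; rewrite mxE summxE; apply: eq_bigr => j _.
by rewrite fZ !mxE.
Qed.

Lemma dim_transfer n1 n2 m1 m2 (K1 : 'M[F]_(n1, m1)) (K2 : 'M[F]_(n2, m2))
    (f : 'rV[F]_n1 -> 'rV[F]_n2) :
  linP f ->
  (forall v, v *m K1 = 0 -> f v *m K2 = 0) ->
  (forall v, v *m K1 = 0 -> f v = 0 -> v = 0) ->
  (n1 - \rank K1 <= n2 - \rank K2)%N.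
Proof.
move=> lin H1 H2.
have Ef := mul_lin1 lin.
set Phi := lin1_mx f.
rewrite -!mxrank_ker.
set V := kermx K1.
have VK : V *m K1 = 0 by apply/sub_kermxP.
have rowV : forall i, row i V *m K1 = 0 by move=> i; rewrite -row_mul VK row0.
have := mxrank_mul_ker V Phi.
set W := (V :&: kermx Phi)%MS.
have W0 : W = 0.
  have WK : W *m K1 = 0.
    apply/sub_kermxP; apply: submx_trans (capmxSl _ _) _; exact: submx_refl.
  have WP : W *m Phi = 0 by apply/sub_kermxP; exact: capmxSr.
  apply/row_matrixP => i; rewrite row0; apply: H2.
    by rewrite -row_mul WK row0.
  by rewrite -Ef -row_mul WP row0.
rewrite W0 mxrank0 addn0 => <-.
apply: mxrankS; apply/sub_kermxP.
apply/row_matrixP => i; rewrite row0.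
have := H1 _ (rowV i); rewrite -Ef => <-.
by rewrite !row_mul.
Qed.

End LinAlg.


Section Hom.
Variables (k : fieldType) (n m : nat) (V : Type).

Definition ishom (X1 Y1 X2 Y2 : 'I_m -> 'M[k]_n) (F : 'M[k]_n) :=
  forall i, X1 i *m F = F *m X2 i /\ Y1 i *m F = F *m Y2 i.

Definition BigF (X1 Y1 X2 Y2 : 'I_m -> 'M[k]_n) (F : 'M[k]_n) : 'M[k]_(m + m, n * n) :=
  col_mx (\matrix_(i < m) mxvec (X1 i *m F - F *m X2 i))
         (\matrix_(i < m) mxvec (Y1 i *m F - F *m Y2 i)).

Definition hvec X1 Y1 X2 Y2 (v : 'rV[k]_(n * n)) := mxvec (BigF X1 Y1 X2 Y2 (vec_mx v)).

Definition Kmat X1 Y1 X2 Y2 := lin1_mx (hvec X1 Y1 X2 Y2).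

Lemma comm_lin (X Y : 'M[k]_n) a F G :
  X *m (a *: F + G) - (a *: F + G) *m Y = a *: (X *m F - F *m Y) + (X *m G - G *m Y).
Proof.
rewrite mulmxDr mulmxDl -scalemxAr -scalemxAl scalerBr opprD addrACA //.
Qed.

Lemma hvec_lin X1 Y1 X2 Y2 : linP (hvec X1 Y1 X2 Y2).
Proof.
move=> a u v; rewrite /hvec [vec_mx _]linearP.
set F := vec_mx u; set G := vec_mx v.
suff -> : BigF X1 Y1 X2 Y2 (a *: F + G) = a *: BigF X1 Y1 X2 Y2 F + BigF X1 Y1 X2 Y2 G.
  by rewrite linearP.
rewrite /BigF scale_col_mx add_col_mx; congr col_mx; apply/matrixP => i j; rewrite !mxE;
  by rewrite comm_lin linearP !mxE.
Qed.

Lemma Kmat_ker X1 Y1 X2 Y2 v :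
  v *m Kmat X1 Y1 X2 Y2 = 0 <-> ishom X1 Y1 X2 Y2 (vec_mx v).
Proof.
rewrite /Kmat mul_lin1; last exact: hvec_lin.
rewrite /hvec; split.
  move/eqP; rewrite mxvec_eq0 col_mx_eq0 => /andP[/eqP H1 /eqP H2] i.
  have := congr1 (row i) H1; have := congr1 (row i) H2; rewrite !rowK !row0.
  by move=> /eqP; rewrite mxvec_eq0 subr_eq0 => /eqP -> /eqP; rewrite mxvec_eq0 subr_eq0 => /eqP ->.
move=> H; apply/eqP; rewrite mxvec_eq0 col_mx_eq0; apply/andP; split;
  apply/eqP/row_matrixP => i; rewrite rowK row0; have [H1 H2] := H i;
  by rewrite ?H1 ?H2 subrr linear0.
Qed.

Lemma pmx_mxvec p q (M : (V -> k) -> 'M[k]_(p, q)) : pmx M -> pmx (fun x => mxvec (M x)).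
Proof.
move=> HM i j; case/mxvec_indexP: j => a b.
by apply: (polyf_ext (HM a b)) => x; rewrite (ord1 i) mxvecE.
Qed.

Lemma pmx_col p1 p2 q (M : (V -> k) -> 'M[k]_(p1, q)) (N : (V -> k) -> 'M[k]_(p2, q)) :
  pmx M -> pmx N -> pmx (fun x => col_mx (M x) (N x)).
Proof.
move=> HM HN i j; rewrite -(splitK i); case: (split i) => a /=.
  by apply: (polyf_ext (HM a j)) => x; rewrite col_mxEu.
by apply: (polyf_ext (HN a j)) => x; rewrite col_mxEd.
Qed.

Lemma pmx_rows p q (M : 'I_p -> (V -> k) -> 'rV[k]_q) : (forall i, pmx (M i)) ->
  pmx (fun x => \matrix_(i < p) M i x).
Proof. by move=> HM i j; apply: (polyf_ext (HM i 0 j)) => x; rewrite mxE. Qed.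

Lemma pmx_Kmat (X1 Y1 X2 Y2 : (V -> k) -> 'I_m -> 'M[k]_n) :
  (forall i, pmx (fun x => X1 x i)) -> (forall i, pmx (fun x => Y1 x i)) ->
  (forall i, pmx (fun x => X2 x i)) -> (forall i, pmx (fun x => Y2 x i)) ->
  pmx (fun x => Kmat (X1 x) (Y1 x) (X2 x) (Y2 x)).
Proof.
move=> H1 H2 H3 H4 r c.
apply: (@polyf_ext _ _ (fun x => hvec (X1 x) (Y1 x) (X2 x) (Y2 x) (delta_mx 0 r) 0 c)); last first.
  by move=> x; rewrite /Kmat /lin1_mx mxE.
apply: (pmx_mxvec (M := fun x => BigF (X1 x) (Y1 x) (X2 x) (Y2 x) _)).
apply: pmx_col; apply: pmx_rows => i; apply: pmx_mxvec;
  apply: pmx_sub; apply: pmx_mul => //; exact: pmx_const.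
Qed.

End Hom.


Section Main.
Variables (k : fieldType) (A : falgType k).
Local Notation d := (dimA A).
Local Notation Vt := (bool * 'I_d * 'I_d * 'I_d)%type.
Definition b (i : 'I_d) : A := (bas A)`_i.

Definition Lx (x : Vt -> k) i : 'M[k]_d := \matrix_(p, q) x (true, i, p, q).
Definition Rx (x : Vt -> k) i : 'M[k]_d := \matrix_(p, q) x (false, i, p, q).

Lemma Lx_coords L R i : Lx (bimod_coords L R) i = L i.
Proof. by apply/matrixP => p q; rewrite mxE. Qed.
Lemma Rx_coords L R i : Rx (bimod_coords L R) i = R i.
Proof. by apply/matrixP => p q; rewrite mxE. Qed.
Lemma pmx_Lx i : pmx (fun x : Vt -> k => Lx x i).
Proof. by move=> p q; apply: (polyf_ext (polyf_var _ (true, i, p, q))) => x; rewrite mxE. Qed.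
Lemma pmx_Rx i : pmx (fun x : Vt -> k => Rx x i).
Proof. by move=> p q; apply: (polyf_ext (polyf_var _ (false, i, p, q))) => x; rewrite mxE. Qed.

Definition cj (g : 'M[k]_d) (X : 'I_d -> 'M[k]_d) i := invmx g *m X i *m g.

Lemma transfer (L R : 'I_d -> 'M[k]_d) x0 (F : (Vt -> k) -> k) :
  polyf F -> zariski_closure (bimod_orbit L R) x0 -> F x0 != 0 ->
  exists2 g, g \in unitmx & F (bimod_coords (cj g L) (cj g R)) != 0.
Proof.
move=> [p Hp] Hcl Hx0; apply: NNPP => Hno; move: Hx0; rewrite -Hp Hcl ?eqxx //.
move=> y [g gu ->]; rewrite Hp; apply/eqP/negPn/negP => nz; apply: Hno; by exists g.
Qed.

Lemma semicont p q (K : (Vt -> k) -> 'M[k]_(p, q)) L R x0 :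
  pmx K -> zariski_closure (bimod_orbit L R) x0 ->
  exists2 g, g \in unitmx & (\rank (K x0) <= \rank (K (bimod_coords (cj g L) (cj g R))))%N.
Proof.
move=> HK Hcl; have [P [Q HPQ]] := rank_minor (K x0).
have pF : polyf (fun x => \det (P *m K x *m Q)).
  by apply: polyf_det; apply: pmx_mul; [apply: pmx_mul => //|]; apply: pmx_const.
have [g gu Hg] := transfer pF Hcl HPQ.
exists g => //.
have : \rank (P *m K (bimod_coords (cj g L) (cj g R)) *m Q) = \rank (K x0).
  by apply: mxrank_unit; rewrite unitmxE unitfE.
move=> <-; apply: leq_trans (mxrankM_maxl _ _) _; exact: mxrankM_maxr.
Qed.

Definition cv (x : A) : 'rV[k]_d := \row_i coord (bas A) i x.
Definition elt (c : 'rV[k]_d) : A := \sum_i c 0 i *: b i.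

Lemma bas_free : free (bas A).
Proof. exact: basis_free (vbasisP fullv). Qed.

Lemma coord_bas (i j : 'I_d) : coord (bas A) j (b i) = (i == j)%:R.
Proof. exact: coord_free bas_free. Qed.

Lemma cvK x : elt (cv x) = x.
Proof.
rewrite /elt [RHS](coord_vbasis (memvf x)); apply: eq_bigr => i _; by rewrite mxE.
Qed.

Lemma coord_elt c j : coord (bas A) j (elt c) = c 0 j.
Proof.
rewrite /elt linear_sum (bigD1 j) //= big1 => [|i ij]; rewrite linearZ /= [X in _ * X]coord_bas.
  by rewrite eqxx mulr1 addr0.
by rewrite (negbTE ij) mulr0.
Qed.

Lemma eltK c : cv (elt c) = c.
Proof. by apply/rowP => j; rewrite mxE coord_elt. Qed.

Lemma cv_sum (I : finType) (c : I -> k) (y : I -> A) :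
  cv (\sum_i c i *: y i) = \sum_i c i *: cv (y i).
Proof.
apply/rowP => j; rewrite mxE summxE linear_sum; apply: eq_bigr => i _.
by rewrite linearZ !mxE.
Qed.

Lemma mx_eq_cv (M N : 'M[k]_d) : (forall x, cv x *m M = cv x *m N) -> M = N.
Proof.
move=> H; apply/row_matrixP => i; rewrite !rowE -(eltK (delta_mx 0 i)); exact: H.
Qed.

Lemma actx_bas n (X : 'I_d -> 'M[k]_n) (i : 'I_d) : actx X (b i) = X i.
Proof.
rewrite /actx (bigD1 i) //= coord_bas eqxx scale1r big1 ?addr0 // => j ji.
by rewrite coord_bas eq_sym (negbTE ji) scale0r.
Qed.

Lemma actx_lin n (X : 'I_d -> 'M[k]_n) a x y :
  actx X (a *: x + y) = a *: actx X x + actx X y.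
Proof.
rewrite /actx scaler_sumr -big_split; apply: eq_bigr => i _.
by rewrite linearP scalerDl scalerA.
Qed.

Lemma actx_elt n (X : 'I_d -> 'M[k]_n) c : actx X (elt c) = \sum_i c 0 i *: X i.
Proof. by apply: eq_bigr => i _; rewrite coord_elt. Qed.

Lemma actx_cj g (X : 'I_d -> 'M[k]_d) a : actx (cj g X) a = invmx g *m actx X a *m g.
Proof.
rewrite /actx /cj mulmx_sumr mulmx_suml; apply: eq_bigr => i _.
by rewrite scalemxAl scalemxAr.
Qed.

Lemma expand x : x = \sum_i coord (bas A) i x *: b i.
Proof. by rewrite -{1}(cvK x); apply: eq_bigr => i _; rewrite mxE. Qed.

Lemma cv_rreg x a : cv x *m rreg a = cv (x * a).
Proof.
apply/rowP => j; rewrite !mxE [in RHS](expand x) mulr_suml linear_sum.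
by apply: eq_bigr => i _; rewrite !mxE -scalerAl linearZ.
Qed.

Lemma cv_lreg x a : cv x *m lreg a = cv (a * x).
Proof.
apply/rowP => j; rewrite !mxE [in RHS](expand x) mulr_sumr linear_sum.
by apply: eq_bigr => i _; rewrite !mxE -scalerAr linearZ.
Qed.

Lemma actx_Rreg a : actx (@Rreg _ A) a = rreg a.
Proof.
apply: mx_eq_cv => x; rewrite cv_rreg /actx mulmx_sumr.
rewrite [in RHS](expand a) mulr_sumr.
under [in RHS]eq_bigr do rewrite -scalerAr.
rewrite cv_sum; apply: eq_bigr => i _.
by rewrite -scalemxAr /Rreg cv_rreg.
Qed.

Lemma actx_Lreg a : actx (@Lreg _ A) a = lreg a.
Proof.
apply: mx_eq_cv => x; rewrite cv_lreg /actx mulmx_sumr.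
rewrite [in RHS](expand a) mulr_suml.
under [in RHS]eq_bigr do rewrite -scalerAl.
rewrite cv_sum; apply: eq_bigr => i _.
by rewrite -scalemxAr /Lreg cv_lreg.
Qed.

End Main.


Section Proof5.
Variables (k : fieldType) (A : falgType k).
Local Notation d := (dimA A).
Local Notation Lr := (@Lreg _ A).
Local Notation Rr := (@Rreg _ A).
Variables (L R : 'I_d -> 'M[k]_d).
Hypothesis HB : is_bimod L R.
Hypothesis Hcl : zariski_closure (bimod_orbit L R) (bimod_coords Lr Rr).

Lemma LxF L' R' : (@Lx _ A) (bimod_coords L' R') = L'.
Proof. by apply: functional_extensionality => i; rewrite Lx_coords. Qed.
Lemma RxF L' R' : (@Rx _ A) (bimod_coords L' R') = R'.
Proof. by apply: functional_extensionality => i; rewrite Rx_coords. Qed.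

Lemma row_free_of m n (M : 'M[k]_(m, n)) : (forall c : 'rV[k]_m, c *m M = 0 -> c = 0) -> row_free M.
Proof.
move=> H; rewrite -kermx_eq0; apply/eqP/row_matrixP => i; rewrite row0; apply: H.
by rewrite -row_mul mulmx_ker row0.
Qed.

Definition Fa (x : (bool * 'I_d * 'I_d * 'I_d) -> k) : 'M[k]_(d, d * d) :=
  \matrix_(i < d) mxvec (@Rx _ A x i).

Lemma Fa_mul x c : c *m Fa x = mxvec (\sum_i c 0 i *: @Rx _ A x i).
Proof.
rewrite mulmx_sum_row linear_sum; apply: eq_bigr => i _.
by rewrite rowK linearZ.
Qed.

Lemma faithful z : actx R z = 0 -> z = 0.
Proof.
move=> Hz.
have pF : pmx (fun x => Fa x).
  by apply: pmx_rows => i; apply: pmx_mxvec; apply: pmx_Rx.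
have [g gu Hg] := semicont pF Hcl.
have r0 : \rank (Fa (bimod_coords Lr Rr)) = d.
  apply/eqP; apply: row_free_of => c; rewrite Fa_mul RxF.
  rewrite -actx_elt actx_Rreg => /eqP; rewrite mxvec_eq0 => /eqP H.
  by rewrite -(eltK c) -[elt c]mul1r -cv_rreg H mulmx0.
have fr : row_free (Fa (bimod_coords (cj g L) (cj g R))).
  by rewrite /row_free eqn_leq rank_leq_row -{1}r0.
have := @row_free_inj _ 1 _ _ _ fr (cv z) 0.
rewrite mul0mx Fa_mul RxF -actx_elt cvK actx_cj Hz mulmx0 mul0mx linear0.
by move=> /(_ erefl) H; rewrite -(cvK z) H /elt big1 // => i _; rewrite mxE scale0r.
Qed.


Lemma extend_hom n (X1 X2 : 'I_d -> 'M[k]_n) F :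
  (forall i, X1 i *m F = F *m X2 i) -> forall a, actx X1 a *m F = F *m actx X2 a.
Proof.
move=> H a; rewrite /actx mulmx_suml mulmx_sumr; apply: eq_bigr => i _.
by rewrite -scalemxAl -scalemxAr H.
Qed.

Lemma endA F : ishom Lr Rr Lr Rr F ->
  let z := elt (cv 1 *m F) in
  (forall x, cv x *m F = cv (z * x)) /\ (forall a, a * z = z * a).
Proof.
move=> H z.
have HR : forall a, rreg a *m F = F *m rreg a.
  by move=> a; rewrite -actx_Rreg; apply: extend_hom => i; case: (H i).
have HL : forall a, lreg a *m F = F *m lreg a.
  by move=> a; rewrite -actx_Lreg; apply: extend_hom => i; case: (H i).
have cz : cv z = cv 1 *m F by rewrite eltK.
have E1 : forall x, cv x *m F = cv (z * x).
  by move=> x; rewrite -[x in LHS]mul1r -cv_rreg -mulmxA HR mulmxA -cz cv_rreg.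
split => // a.
have E2 : cv a *m F = cv (a * z).
  by rewrite -[a in LHS]mulr1 -cv_lreg -mulmxA HL mulmxA -cz cv_lreg.
by rewrite -(cvK (a * z)) -E2 E1 cvK.
Qed.

Definition phi3 (v : 'rV[k]_(d * d)) : 'rV[k]_(d * d) :=
  mxvec (\sum_i (cv 1 *m vec_mx v) 0 i *: R i).

Lemma phi3_lin : linP phi3.
Proof.
move=> a u v; rewrite /phi3 [vec_mx (_ + _)]linearP mulmxDr -scalemxAr.
set U := cv 1 *m vec_mx u; set W := cv 1 *m vec_mx v.
suff -> : \sum_i (a *: U + W) 0 i *: R i = a *: (\sum_i U 0 i *: R i) + \sum_i W 0 i *: R i.
  by rewrite linearP.
rewrite scaler_sumr -big_split; apply: eq_bigr => i _.
by rewrite !mxE scalerDl scalerA.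
Qed.

Lemma step3 : (d * d - \rank (Kmat Lr Rr Lr Rr) <= d * d - \rank (Kmat L R L R))%N.
Proof.
have [HL1 HR1 HLm HRm HLR] := HB.
apply: (dim_transfer phi3_lin).
  move=> v /Kmat_ker /endA [_ Hc]; apply/Kmat_ker; rewrite /phi3 mxvecK -actx_elt.
  set z := elt _ => i; split.
    by rewrite -(actx_bas L i) HLR.
  by rewrite -(actx_bas R i) -HRm Hc HRm.
move=> v /Kmat_ker /endA [H1 _]; rewrite /phi3 -actx_elt => /eqP; rewrite mxvec_eq0 => /eqP.
move/faithful => z0.
rewrite -(vec_mxK v); apply/eqP; rewrite mxvec_eq0; apply/eqP.
apply: mx_eq_cv => x; by rewrite H1 z0 mul0r mulmx0 -(eltK 0) /elt big1 // => i _; rewrite mxE scale0r.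
Qed.


Lemma linR (g : 'M[k]_d) : linP (fun v : 'rV[k]_(d * d) => mxvec (vec_mx v *m g)).
Proof. by move=> a u v; rewrite linearP mulmxDl -scalemxAl linearP. Qed.
Lemma linL (g : 'M[k]_d) : linP (fun v : 'rV[k]_(d * d) => mxvec (g *m vec_mx v)).
Proof. by move=> a u v; rewrite linearP mulmxDr -scalemxAr linearP. Qed.

Lemma homR (g : 'M[k]_d) X1 Y1 X2 Y2 F : g \in unitmx ->
  ishom X1 Y1 X2 Y2 F -> ishom X1 Y1 (cj g X2) (cj g Y2) (F *m g).
Proof.
move=> gu H i; have [H1 H2] := H i; rewrite /cj !mulmxA -!(mulmxA F g (invmx g)) mulmxV // mulmx1.
by rewrite H1 H2.
Qed.

Lemma homL (g : 'M[k]_d) X1 Y1 X2 Y2 F : g \in unitmx ->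
  ishom X1 Y1 X2 Y2 F -> ishom (cj g X1) (cj g Y1) X2 Y2 (invmx g *m F).
Proof.
move=> gu H i; have [H1 H2] := H i; rewrite /cj -!mulmxA (mulmxA g (invmx g) F) mulmxV // mul1mx.
by rewrite H1 H2.
Qed.

Lemma rk_le m1 (K : 'M[k]_(d * d, m1)) : (\rank K <= d * d)%N.
Proof. exact: rank_leq_row. Qed.

Lemma step4 : (\rank (Kmat L R Lr Rr) <= \rank (Kmat L R L R))%N.
Proof.
have pK : pmx (fun x => Kmat L R (@Lx _ A x) (@Rx _ A x)).
  by apply: pmx_Kmat => i; rewrite ?pmx_Lx ?pmx_Rx //; first [exact: pmx_const | exact: pmx_Lx | exact: pmx_Rx].
have [g gu Hg] := semicont pK Hcl; rewrite !LxF !RxF in Hg.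
have T : (d * d - \rank (Kmat L R L R) <= d * d - \rank (Kmat L R (cj g L) (cj g R)))%N.
  apply: (@dim_transfer _ _ _ _ _ (Kmat L R L R) (Kmat L R (cj g L) (cj g R)) _ (linR g)).
- move=> v /Kmat_ker H; apply/Kmat_ker; rewrite mxvecK; exact: homR.
- move=> v _ /eqP; rewrite mxvec_eq0 => /eqP H.
  by rewrite -(vec_mxK v) -(mulmxK gu (vec_mx v)) H mul0mx linear0.
move: (rk_le (Kmat L R L R)) (rk_le (Kmat L R (cj g L) (cj g R))) Hg T.
move: (\rank _) (\rank _) (\rank _) => a1 a2 a3.
rewrite /= => h1 h2 h3 h4; apply: leq_trans h3 _; lia.
Qed.


Lemma pmx_vec_mx (M : ((bool * 'I_d * 'I_d * 'I_d) -> k) -> 'rV[k]_(d * d)) :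
  pmx M -> pmx (fun x => vec_mx (M x)).
Proof. by move=> HM i j; apply: (polyf_ext (HM 0 (mxvec_index i j))) => x; rewrite mxE. Qed.

Lemma final_iso : bimod_iso L R Lr Rr.
Proof.
set KAA := Kmat Lr Rr Lr Rr.
have s3 := step3; have s4 := step4.
set u : 'rV[k]_(d * d) := mxvec 1%:M.
have uK : u *m KAA = 0.
  apply/Kmat_ker; rewrite /u mxvecK => i; by split; rewrite mulmx1 mul1mx.
have [P [Q HPQ]] := rank_minor KAA.
pose KP x := Kmat (@Lx _ A x) (@Rx _ A x) Lr Rr.
pose KJ x := KP x *m Q.
pose S x := P *m KJ x.
pose D x := \det (S x).
pose fv x := D x *: u - (u *m KJ x) *m \adj (S x) *m P.
pose Fp x := D x * \det (vec_mx (fv x)).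
have pKP : pmx KP.
  by apply: pmx_Kmat => i; first [exact: pmx_const | exact: pmx_Lx | exact: pmx_Rx].
have pKJ : pmx KJ by apply: pmx_mul => //; apply: pmx_const.
have pS : pmx S by apply: pmx_mul => //; apply: pmx_const.
have pfv : pmx fv.
  apply: pmx_sub; first by apply: pmx_scale; [apply: polyf_det|apply: pmx_const].
  apply: pmx_mul; last exact: pmx_const.
  apply: pmx_mul; last exact: pmx_adj.
  by apply: pmx_mul => //; apply: pmx_const.
have pF : polyf Fp.
  by apply: polyf_mul; apply: polyf_det => //; apply: pmx_vec_mx.
set x0 := bimod_coords Lr Rr.
have KP0 : KP x0 = KAA by rewrite /KP LxF RxF.
have D0 : D x0 != 0 by rewrite /D /S /KJ KP0 mulmxA.
have uKJ0 : u *m KJ x0 = 0 by rewrite /KJ KP0 mulmxA uK mul0mx.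
have F0 : Fp x0 != 0.
  rewrite /Fp /fv uKJ0 !mul0mx subr0 /u [vec_mx _]linearZ /= mxvecK detZ det1 mulr1.
  by rewrite mulf_neq0 // expf_neq0.
have [g gu Hg] := transfer pF Hcl F0.
set xP := bimod_coords (cj g L) (cj g R) in Hg.
have [DP FP] : D xP != 0 /\ \det (vec_mx (fv xP)) != 0.
  by move: Hg; rewrite /Fp mulf_eq0 negb_or => /andP.
have fKJ : fv xP *m KJ xP = 0.
  have E : u *m KJ xP *m \adj (S xP) *m P *m KJ xP = D xP *: (u *m KJ xP).
    by rewrite -(mulmxA _ P) -/(S xP) -mulmxA mul_adj_mx mul_mx_scalar.
  by rewrite /fv mulmxBl E -scalemxAl subrr.
have rS : \rank (S xP) = \rank KAA by apply: mxrank_unit; rewrite unitmxE unitfE.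
have rKJ : (\rank KAA <= \rank (KJ xP))%N.
  by have := mxrankM_maxr P (KJ xP); rewrite -/(S xP) rS.
have KPE : KP xP = Kmat (cj g L) (cj g R) Lr Rr by rewrite /KP LxF RxF.
have rKP : (\rank (KP xP) <= \rank KAA)%N.
  have T : (d * d - \rank (Kmat L R Lr Rr) <= d * d - \rank (KP xP))%N.
    rewrite KPE; apply: (@dim_transfer _ _ _ _ _ (Kmat L R Lr Rr) _ _ (linL (invmx g))).
    - move=> v /Kmat_ker H; apply/Kmat_ker; rewrite mxvecK; exact: homL.
    - move=> v _ /eqP; rewrite mxvec_eq0 => /eqP H.
      by rewrite -(vec_mxK v) -(mulKVmx gu (vec_mx v)) H mulmx0 linear0.
  move: (rk_le (Kmat L R Lr Rr)) (rk_le (KP xP)) (rk_le (Kmat L R L R)) (rk_le KAA) s3 s4 T.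
  move: (\rank _) (\rank _) (\rank _) (\rank _) => a1 a2 a3 a4 /=; lia.
have sub : ((KJ xP)^T <= (KP xP)^T)%MS by rewrite /KJ trmx_mul submxMl.
have eqr : \rank (KJ xP) = \rank (KP xP).
  apply/eqP; rewrite eqn_leq mxrankM_maxl /=; exact: leq_trans rKP rKJ.
have sub2 : ((KP xP)^T <= (KJ xP)^T)%MS.
  have [_ E] := mxrank_leqif_eq sub; move: E; rewrite !mxrank_tr eqr eqxx.
  by move=> /esym /andP [].
have [X HX] := submxP sub2.
have fK : fv xP *m KP xP = 0.
  by rewrite -[KP xP]trmxK HX trmx_mul trmxK mulmxA fKJ mul0mx.
move: fK; rewrite KPE => /Kmat_ker Hh.
exists (g *m vec_mx (fv xP)).
  by rewrite unitmx_mul gu unitmxE unitfE FP.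
move=> i; have [h1 h2] := Hh i; rewrite /cj in h1 h2.
by split; rewrite -mulmxA; [rewrite -h1 | rewrite -h2]; rewrite !mulmxA mulmxV // mul1mx.
Qed.

End Proof5.

Unset Implicit Arguments.

Theorem proposition9 (k : closedFieldType) (A : falgType k)
    (L R : 'I_(dimA A) -> 'M[k]_(dimA A)) :
  self_injective A ->
  is_bimod L R ->
  zariski_closure (bimod_orbit L R) (bimod_coords (@Lreg _ A) (@Rreg _ A)) ->
  bimod_iso L R (@Lreg _ A) (@Rreg _ A).
Proof. by move=> _ HB Hcl; apply: final_iso. Qed.
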